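(* Let $\Phi=(A;\{E_i\}_{i=0}^d;A^*;\{E^*_i\}_{i=0}^d)$ be a tridiagonal system on $V$ with $d\ge1$, such that $(A,A^* )$ satisfies the $q$-Serre relations, with $E_iV$ the eigenspace of $A$ for $\theta_i=q^{2i-d}$ and $E^*_iV$ the eigenspace of $A^*$ for $\theta^*_i=q^{d-2i}$. Let $\{U_i\}_{i=0}^d$ be its split decomposition, $K:V\to V$ the linear map acting on $U_i$ as $q^{d-2i}I$, $t$ a scalar, $B=A$ and $B^*=tA^*+(1-t)K$. Then for $0\le i\le d$, on $U_i$ we have $$(B^*-\theta^*_1I)\cdots(B^*-\theta^*_iI)=t^i(A^*-\theta^*_1I)\cdots(A^*-\theta^*_iI),$$ and moreover $(B^*-\theta^*_1I)\cdots(B^*-\theta^*_iI)U_i\subseteq U_0$.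
   Context: $\mathcal K$ is an algebraically closed field; $V$ is a nonzero finite-dimensional vector space over $\mathcal K$; $q\in\mathcal K$ is nonzero and not a root of unity; $[3]_q=q^2+1+q^{-2}$. The $q$-Serre relations for $(X,Y)$: $X^3Y-[3]_qX^2YX+[3]_qXYX^2-YX^3=0$ and $Y^3X-[3]_qY^2XY+[3]_qYXY^2-XY^3=0$. Primitive idempotent of a diagonalizable $X$ for eigenvalue $\lambda_i$: $\prod_{j\ne i}\frac{X-\lambda_jI}{\lambda_i-\lambda_j}$. A tridiagonal system on $V$ is a sequence $(A;\{E_i\}_{i=0}^d;A^*;\{E^*_i\}_{i=0}^d)$ with $A,A^*$ diagonalizable, $\{E_i\}$, $\{E^*_i\}$ orderings of their primitive idempotents, $E_iA^*E_j=0$ and $E^*_iAE^*_j=0$ when $|i-j|>1$, and no subspaces other than $0,V$ invariant under both $A$ and $A^*$. Split decomposition: $U_i=(E^*_0V+\cdots+E^*_iV)\cap(E_iV+\cdots+E_dV)$; known: $V=U_0\oplus\cdots\oplus U_d$, $(A-\theta_iI)U_i\subseteq U_{i+1}$, $(A^*-\theta^*_iI)U_i\subseteq U_{i-1}$ ($U_{-1}=U_{d+1}=0$). *)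

(* Defs.v *)
From HB Require Import structures.
From mathcomp Require Import all_boot all_order all_algebra.
Set Implicit Arguments. Unset Strict Implicit. Unset Printing Implicit Defensive.
Import Order.TTheory GRing.Theory Num.Theory.
Local Open Scope ring_scope.

(* Conventions: V = 'rV[K]_n (n > 0 since V is nonzero); a linear map X on V is
   represented by a matrix X : 'M[K]_n acting on row vectors, v |-> v *m X. *)

Definition prim_idem (K : fieldType) (n d : nat) (X : 'M[K]_n)
  (th : 'I_d.+1 -> K) (i : 'I_d.+1) : 'M[K]_n :=
  \prod_(j < d.+1 | j != i) ((th i - th j)^-1 *: (X - (th j)%:M)).

Definition diag_with_eigenvalues (K : fieldType) (n d : nat) (X : 'M[K]_n)
  (th : 'I_d.+1 -> K) : Prop :=
  [/\ diagonalizable X, injective th &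
      forall a, eigenvalue X a <-> exists i, a = th i].

Definition tridiagonal_system (K : fieldType) (n d : nat)
  (A As : 'M[K]_n) (th ths : 'I_d.+1 -> K) : Prop :=
  [/\ diag_with_eigenvalues A th,
      diag_with_eigenvalues As ths,
      (forall i j : 'I_d.+1, (i.+1 < j)%N \/ (j.+1 < i)%N ->
          prim_idem A th i *m As *m prim_idem A th j = 0),
      (forall i j : 'I_d.+1, (i.+1 < j)%N \/ (j.+1 < i)%N ->
          prim_idem As ths i *m A *m prim_idem As ths j = 0) &
      (forall W : 'M[K]_n, (W *m A <= W)%MS -> (W *m As <= W)%MS ->
          (W == (0 : 'M[K]_n))%MS \/ (W == (1%:M : 'M[K]_n))%MS)].

Definition split_comp (K : fieldType) (n d : nat)
  (A As : 'M[K]_n) (th ths : 'I_d.+1 -> K) (i : nat) : 'M[K]_n :=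
  ((\sum_(j < d.+1 | (j <= i)%N) prim_idem As ths j) :&:
   (\sum_(j < d.+1 | (i <= j)%N) prim_idem A th j))%MS.

Definition q_serre (K : fieldType) (n : nat) (q : K) (X Y : 'M[K]_n) : Prop :=
  let q3 := q ^+ 2 + 1 + q ^- 2 in
  X ^+ 3 * Y - q3 *: (X ^+ 2 * Y * X) + q3 *: (X * Y * X ^+ 2) - Y * X ^+ 3 = 0 /\
  Y ^+ 3 * X - q3 *: (Y ^+ 2 * X * Y) + q3 *: (Y * X * Y ^+ 2) - X * Y ^+ 3 = 0.

Definition qth (K : fieldType) (q : K) (d i : nat) : K := q ^ (2 * i%:Z - d%:Z).
Definition qths (K : fieldType) (q : K) (d i : nat) : K := q ^ (d%:Z - 2 * i%:Z).

(* Main.v *)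
Require Import Defs.
From HB Require Import structures.
From mathcomp Require Import all_boot all_order all_algebra.
Set Implicit Arguments. Unset Strict Implicit. Unset Printing Implicit Defensive.
Import Order.TTheory GRing.Theory Num.Theory.
Local Open Scope ring_scope.

Section H.
Variables (K : fieldType) (n : nat).

Lemma eig_prod (X : 'M[K]_n) (w : 'rV[K]_n) a (I : Type) (r : seq I) (P : pred I)
  (c b : I -> K) :
  w *m X = a *: w ->
  w *m \prod_(j <- r | P j) (c j *: (X - (b j)%:M)) =
  (\prod_(j <- r | P j) (c j * (a - b j))) *: w.
Proof.
move=> hw; elim/big_rec2: _ => [|j x M Pj IH]; first by rewrite mulmx1 scale1r.
rewrite -mulmxE mulmxA -scalemxAr mulmxBr hw mul_mx_scalar -scalerBl.
rewrite -scalemxAl.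
by rewrite -scalemxAl IH !scalerA.
Qed.

Lemma E_on_eig d (X : 'M[K]_n) (th : 'I_d.+1 -> K) (w : 'rV[K]_n) m k :
  injective th -> w *m X = th m *: w ->
  w *m prim_idem X th k = (k == m)%:R *: w.
Proof.
move=> inj hw; rewrite /prim_idem (@eig_prod X w (th m)) //.
case: eqVneq => [->|nkm].
  rewrite big1 // => j hj; rewrite mulVf // subr_eq0.
  by apply/eqP => /inj /eqP; rewrite eq_sym (negPf hj).
by rewrite (bigD1 m) 1?eq_sym //= subrr mulr0 mul0r.
Qed.

Lemma spanning d (X : 'M[K]_n) (th : 'I_d.+1 -> K) (v : 'rV[K]_n) :
  diag_with_eigenvalues X th ->
  exists vs : 'I_d.+1 -> 'rV[K]_n,
    v = \sum_k vs k /\ forall k, vs k *m X = th k *: vs k.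
Proof.
case=> hdiag inj heig.
have [rs _ rsP] := proj1 (@diagonalizablePeigen K n X) hdiag.
have h1 : (1%:M <= \sum_(k < d.+1) eigenspace X (th k))%MS.
  rewrite -rsP; elim/big_rec: _ => [|r M _ IH]; first by rewrite sub0mx.
  rewrite addsmx_sub IH andbT.
  case: (eqVneq (eigenspace X r) 0) => [->|hne]; first by rewrite sub0mx.
  have [i ->] : exists i, r = th i by apply/heig.
  exact: (sumsmx_sup i).
have /sub_sumsmxP [u hu] : (v <= \sum_(k < d.+1) eigenspace X (th k))%MS.
  exact: submx_trans (submx1 _) h1.
exists (fun k => u k *m eigenspace X (th k)); split => // k.
by apply/eigenspaceP; rewrite submxMl.
Qed.

Lemma decomp d (X : 'M[K]_n) (th : 'I_d.+1 -> K) (v : 'rV[K]_n) k :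
  diag_with_eigenvalues X th ->
  v *m prim_idem X th k *m X = th k *: (v *m prim_idem X th k) /\
  v *m (\sum_k prim_idem X th k) = v.
Proof.
move=> hd; have [vs [-> hvs]] := spanning v hd.
have inj : injective th by case: hd.
have hE j : (\sum_k0 vs k0) *m prim_idem X th j = vs j.
  rewrite mulmx_suml (bigD1 j) //= big1 ?addr0.
    by rewrite (E_on_eig _ inj (hvs j)) eqxx scale1r.
  by move=> m hm; rewrite (E_on_eig _ inj (hvs m)) eq_sym (negPf hm) scale0r.
split; first by rewrite hE hvs.
by rewrite mulmx_sumr; apply: eq_bigr => j _; rewrite hE.
Qed.

Lemma sumE d (X : 'M[K]_n) (th : 'I_d.+1 -> K) :
  diag_with_eigenvalues X th -> \sum_k prim_idem X th k = 1%:M.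
Proof.
move=> hd; apply/row_matrixP => i.
by rewrite -(mul1mx (\sum_k _)) row_mul (decomp _ ord0 hd).2.
Qed.

Lemma lower_step d (A As : 'M[K]_n) (th ths : 'I_d.+1 -> K) (i : 'I_d.+1)
  (v : 'rV[K]_n) :
  tridiagonal_system A As th ths -> (1 <= i)%N ->
  (v <= split_comp A As th ths i)%MS ->
  (v *m (As - (ths i)%:M) <= split_comp A As th ths i.-1)%MS.
Proof.
case=> dA dAs tri _ _ hi; rewrite /split_comp !sub_capmx => /andP[h1 h2].
apply/andP; split.
  move/sub_sumsmxP: h1 => [u ->]; rewrite mulmx_suml; apply: summx_sub => j hj.
  rewrite mulmxBr (decomp _ j dAs).1 mul_mx_scalar -scalerBl.
  case: (eqVneq j i) => [->|hne]; first by rewrite subrr scale0r sub0mx.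
  apply: scalemx_sub; apply: (sumsmx_sup j); last exact: submxMl.
  have : (j < i)%N by rewrite ltn_neqAle hj andbT; apply/eqP => /val_inj; apply/eqP.
  by case: (nat_of_ord i) hi => //= i' _; rewrite ltnS.
move/sub_sumsmxP: h2 => [u ->]; rewrite mulmx_suml; apply: summx_sub => j hj.
rewrite mulmxBr mul_mx_scalar; apply: addmx_sub; last first.
  rewrite eqmx_opp; apply: scalemx_sub; apply: (sumsmx_sup j); last exact: submxMl.
  by apply: leq_trans hj; apply: leq_pred.
rewrite -[_ *m As]mulmx1 -(sumE dA) mulmx_sumr; apply: summx_sub => k _.
case: (leqP i.-1 k) => hk; first by apply: (sumsmx_sup k) => //; exact: submxMl.
rewrite -!mulmxA (mulmxA (prim_idem A th j)) tri ?mulmx0 ?sub0mx //; right.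
by apply: leq_trans hj; case: (nat_of_ord i) hk => //= i' ; rewrite ltnS.
Qed.

End H.

Unset Implicit Arguments.
Theorem lemma7p5 (K : closedFieldType) (n d : nat) (q t : K)
  (A As Km : 'M[K]_n.+1) :
  q != 0 ->
  (forall k : nat, (0 < k)%N -> q ^+ k != 1) ->
  (1 <= d)%N ->
  tridiagonal_system A As (fun i : 'I_d.+1 => qth q d i)
                          (fun i : 'I_d.+1 => qths q d i) ->
  q_serre q A As ->
  (forall (i : nat) (v : 'rV[K]_n.+1), (i <= d)%N ->
     (v <= split_comp A As (fun i : 'I_d.+1 => qth q d i)
                           (fun i : 'I_d.+1 => qths q d i) i)%MS ->
     v *m Km = qths q d i *: v) ->
  let B := A in
  let Bs := t *: As + (1 - t) *: Km in
  let U := split_comp A As (fun i : 'I_d.+1 => qth q d i)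
                           (fun i : 'I_d.+1 => qths q d i) in
  forall i : nat, (i <= d)%N ->
    (forall v : 'rV[K]_n.+1, (v <= U i)%MS ->
       v *m (\prod_(1 <= j < i.+1) (Bs - (qths q d j)%:M)) =
       t ^+ i *: (v *m (\prod_(1 <= j < i.+1) (As - (qths q d j)%:M)))) /\
    (U i *m (\prod_(1 <= j < i.+1) (Bs - (qths q d j)%:M)) <= U 0%N)%MS.
Proof.
move=> _ _ _ hsys _ hK B Bs U.
have comm_sub (X : 'M[K]_n.+1) (a : K) (i : nat) :
    GRing.comm (X - a%:M) (\prod_(1 <= j < i.+1) (X - (qths q d j)%:M)).
  have cs (M : 'M[K]_n.+1) (x : K) : GRing.comm M x%:M.
    by rewrite /GRing.comm -!mulmxE scalar_mxC.
  apply: commr_prod => j _; apply: commrB; last exact: cs.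
  by apply: commr_sym; apply: commrB; [exact: commr_refl | exact: cs].
have claim : forall i, (i <= d)%N -> forall v : 'rV[K]_n.+1, (v <= U i)%MS ->
    v *m (\prod_(1 <= j < i.+1) (Bs - (qths q d j)%:M)) =
      t ^+ i *: (v *m (\prod_(1 <= j < i.+1) (As - (qths q d j)%:M))) /\
    (v *m (\prod_(1 <= j < i.+1) (As - (qths q d j)%:M)) <= U 0%N)%MS.
  move=> {}i; elim: i => [|i IH] hi v hv.
    by rewrite !big_geq // mulmx1 expr0 scale1r.
  have hi' : (i.+1 < d.+1)%N by [].
  set c := qths q d i.+1.
  have hw : (v *m (As - c%:M) <= U i)%MS.
    exact: (lower_step (i := Ordinal hi') hsys).
  have hvB : v *m (Bs - c%:M) = t *: (v *m (As - c%:M)).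
    rewrite /Bs !mulmxBr mulmxDr -!scalemxAr (hK _ _ hi hv) !mul_mx_scalar.
    rewrite scalerBl scale1r scalerBr scalerA [t * c]mulrC -scalerA.
    by rewrite -/c addrA addrAC addrK.
  have [IH1 IH2] := IH (ltnW hi) _ hw.
  rewrite (big_nat_recr i.+1) // (big_nat_recr i.+1) //= -/c.
  rewrite -(comm_sub Bs c i) -(comm_sub As c i) -!mulmxE !mulmxA.
  rewrite hvB -scalemxAl IH1 scalerA -exprS; split => //.
move=> i hi; split; first by move=> v hv; have [] := claim i hi v hv.
apply/row_subP => k; rewrite row_mul.
have [-> h2] := claim i hi _ (row_sub k (U i)).
exact: scalemx_sub.
Qed.
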